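(* Let $b\ge1$, let $\lambda^{(1)},\dots,\lambda^{(b)}$ be nonempty partitions of total size $n$, and let $k$ be a positive divisor of $n$. If $k$ divides $\gcd(|\lambda^{(1)}|,\dots,|\lambda^{(b)}|)$, then $$\mathrm{SYT}(\lambda^{(1)}\cup\cdots\cup\lambda^{(b)})^{\operatorname{pr}^{n/k}}=\Big\{I_{n/k,M_1}(T_1)\cup\cdots\cup I_{n/k,M_b}(T_b)\ :\ T_j\in\mathrm{SYT}(\lambda^{(j)})^{\operatorname{pr}^{|\lambda^{(j)}|/k}}\ (1\le j\le b),\ (M_1,\dots,M_b)\in\mathcal{P}\Big\},$$ where $\mathcal{P}$ is the set of ordered set partitions $(M_1,\dots,M_b)$ of $[n/k]$ into pairwise disjoint sets with $|M_j|=|\lambda^{(j)}|/k$. Otherwise, $\mathrm{SYT}(\lambda^{(1)}\cup\cdots\cup\lambda^{(b)})^{\operatorname{pr}^{n/k}}=\varnothing$.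
   Context: Tableaux in English notation. $\lambda^{(1)}\cup\cdots\cup\lambda^{(b)}$ is the skew shape formed by placing translates of the Young diagrams $\lambda^{(1)},\dots,\lambda^{(b)}$ block anti-diagonally, with $\lambda^{(j+1)}$ entirely strictly above and strictly to the right of $\lambda^{(j)}$ (no shared rows or columns); for fillings $U_j$ of the pieces, $U_1\cup\cdots\cup U_b$ denotes the corresponding filling of this skew shape. $\mathrm{SYT}(\cdot)$ is the set of standard tableaux of a shape; for a map $g$, $W^g$ is its fixed point set. Promotion $\operatorname{pr}$ on a standard (skew) tableau with $n$ cells: erase $1$, slide the empty cell by jeu de taquin (repeatedly move into it the smaller of its right and lower neighbours in the shape) until it reaches an outer corner of the shape, fill that corner with $n+1$, subtract $1$ from all entries. For a standard tableau $T$ of size $N$, a positive integer $m$, and $A=\{a_1<\cdots<a_q\}\subseteq[m]$ with $q\mid N$, $I_{m,A}(T)$ is obtained from $T$ by replacing each entry $iq+j$ (with $0\le i<N/q$, $1\le j\le q$) by $im+a_j$. *)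

(* Defs.v *)
From mathcomp Require Import all_boot.
Set Implicit Arguments. Unset Strict Implicit. Unset Printing Implicit Defensive.

(* A cell (row, column) in English notation: rows grow downward, columns to
   the right, both indexed from 0. *)
Definition cell := (nat * nat)%type.

(* A filling: value at each cell; a tableau of shape sh is a filling that is
   0 outside sh. *)
Definition tableau := cell -> nat.

Definition is_partition (la : seq nat) : bool :=
  sorted geq la && all (fun x => 0 < x) la.

Definition ydiag (la : seq nat) : seq cell :=
  flatten [seq [seq (i, j) | j <- iota 0 (nth 0 la i)] | i <- iota 0 (size la)].

(* Skew shape la^(1) u ... u la^(b) (las = [:: la^(1); ...; la^(b)], indexed
   from 0): piece j+1 strictly above and strictly right of piece j. *)
Definition row_off (las : seq (seq nat)) (j : nat) : nat :=
  sumn [seq size (nth [::] las i) | i <- iota j.+1 (size las - j.+1)].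
Definition col_off (las : seq (seq nat)) (j : nat) : nat :=
  sumn [seq head 0 (nth [::] las i) | i <- iota 0 j].
Definition piece (las : seq (seq nat)) (j : nat) : seq cell :=
  [seq (c.1 + row_off las j, c.2 + col_off las j) | c <- ydiag (nth [::] las j)].
Definition skew_union (las : seq (seq nat)) : seq cell :=
  flatten [seq piece las j | j <- iota 0 (size las)].

(* The filling U_1 u ... u U_b of the skew shape (Us j fills piece j,
   in the coordinates of the Young diagram of la^(j)). *)
Definition union_tab (las : seq (seq nat)) (Us : nat -> tableau) : tableau :=
  fun c => foldr (fun j acc =>
    if c \in piece las j then Us j (c.1 - row_off las j, c.2 - col_off las j)
    else acc) 0 (iota 0 (size las)).

Definition SYT (sh : seq cell) (T : tableau) : Prop :=
  [/\ forall c, c \notin sh -> T c = 0,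
      perm_eq [seq T c | c <- sh] (iota 1 (size sh)),
      forall c c', c \in sh -> c' \in sh -> c.1 = c'.1 -> c.2 < c'.2 -> T c < T c'
    & forall c c', c \in sh -> c' \in sh -> c.2 = c'.2 -> c.1 < c'.1 -> T c < T c'].

Definition upd (T : tableau) (e : cell) (v : nat) : tableau :=
  fun c => if c == e then v else T c.

(* Jeu de taquin slide of the empty cell e (fuel bounds the number of moves). *)
Fixpoint jdt (sh : seq cell) (T : tableau) (e : cell) (fuel : nat) : tableau * cell :=
  match fuel with
  | 0 => (T, e)
  | fuel'.+1 =>
      let r := (e.1, e.2.+1) in
      let d := (e.1.+1, e.2) in
      if (r \in sh) && ((d \notin sh) || (T r < T d)) then jdt sh (upd T e (T r)) r fuel'
      else if d \in sh then jdt sh (upd T e (T d)) d fuel'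
      else (T, e)
  end.

(* Promotion: erase 1, slide the hole to an outer corner, put n+1 there,
   subtract 1 from every entry. Output is 0 outside sh. *)
Definition promotion (sh : seq cell) (T : tableau) : tableau :=
  let c1 := nth (0, 0) sh (find (fun c => T c == 1) sh) in
  let (T', e) := jdt sh T c1 (size sh) in
  fun c => if c \in sh then (if c == e then size sh else T' c - 1) else 0.

Definition fixed_SYT (sh : seq cell) (d : nat) (T : tableau) : Prop :=
  SYT sh T /\ iter d (promotion sh) T = T.

(* I_{m,A}: A = [:: a_1; ...; a_q] (strictly increasing), entry i*q + j
   (1 <= j <= q) is replaced by i*m + a_j; 0 (outside the shape) stays 0. *)
Definition I_map (m : nat) (A : seq nat) (T : tableau) : tableau :=
  fun c => let v := T c in
    if v == 0 then 0
    else ((v.-1) %/ size A) * m + nth 0 A ((v.-1) %% size A).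

(* Ordered set partitions (M_1, ..., M_b) of [N] = {1..N} with prescribed
   block sizes; each block is given as its strictly increasing list. *)
Definition ordered_set_partition (N b : nat) (sizes : nat -> nat)
    (Ms : nat -> seq nat) : Prop :=
  (forall j, j < b -> sorted ltn (Ms j) /\ size (Ms j) = sizes j) /\
  perm_eq (flatten [seq Ms j | j <- iota 0 b]) (iota 1 N).

(* Main.v *)
Require Import Defs.
From mathcomp Require Import all_boot.
From mathcomp Require Import zify.
From Stdlib Require Import FunctionalExtensionality.
Set Implicit Arguments. Unset Strict Implicit. Unset Printing Implicit Defensive.

Lemma mem_ydiag la c : (c \in ydiag la) = (c.1 < size la) && (c.2 < nth 0 la c.1).
Proof.
apply/flatten_mapP/andP => [[i] | [H1 H2]].
  rewrite mem_iota => /andP[_ Hi] /mapP [j]; rewrite mem_iota => /andP[_ Hj] ->.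
  by rewrite /= Hi.
exists c.1; first by rewrite mem_iota.
by apply/mapP; exists c.2; [rewrite mem_iota | case: c {H1 H2}].
Qed.

Lemma uniq_ydiag_aux (g : nat -> nat) s a :
  uniq (flatten [seq [seq ((i, j) : cell) | j <- iota 0 (g i)] | i <- iota a s]).
Proof.
elim: s a => [|s IH] a //=.
rewrite cat_uniq IH andbT map_inj_uniq ?iota_uniq; last by move=> x y [].
apply/hasPn => x /flatten_mapP [i'] ; rewrite mem_iota => /andP [Hi' _] /mapP [j _ ->].
apply/negP => /mapP [j' _ [E _]]; by rewrite E ltnn in Hi'.
Qed.

Lemma uniq_ydiag la : uniq (ydiag la).
Proof. exact: uniq_ydiag_aux. Qed.

Lemma size_ydiag la : size (ydiag la) = sumn la.
Proof.
rewrite /ydiag size_flatten /shape -map_comp.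
rewrite (eq_map (g := nth 0 la)); last by move=> i /=; rewrite size_map size_iota.
by rewrite -/(mkseq _ _) mkseq_nth.
Qed.

Lemma part_nth_head la i : is_partition la -> i < size la -> nth 0 la i <= head 0 la.
Proof.
case/andP=> Hs _ Hi; have := sorted_leq_nth (leT := geq) _ _ 0 Hs.
move=> /(_ _ _ 0 i) H; rewrite -nth0; apply: H => //.
- by move=> x y z /= H1 H2; apply: leq_trans H2 H1.
- by move=> x /=.
- by rewrite inE (leq_ltn_trans _ Hi).
Qed.

Lemma part_bound la : is_partition la -> la != [::] -> size la + head 0 la <= (sumn la).+1.
Proof.
case/andP=> _ Hp; case: la Hp => // x s /= /andP[_ Hp] _.
rewrite addSn ltnS addnC leq_add2l.
elim: s Hp => //= y s IH /andP[Hy Hs]; rewrite -add1n; exact: leq_add Hy (IH Hs).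
Qed.

Section Geom.
Variable las : seq (seq nat).
Hypothesis Hpart : all (fun la => is_partition la && (la != [::])) las.
Local Notation b := (size las).
Local Notation la j := (nth [::] las j).

Definition fsh j (c : cell) : cell := (c.1 + row_off las j, c.2 + col_off las j).

Lemma fsh_inj j : injective (fsh j).
Proof. by move=> [x y] [x' y'] [/addIn -> /addIn ->]. Qed.

Lemma piece_fsh j : piece las j = map (fsh j) (ydiag (la j)).
Proof. by []. Qed.

Lemma mem_piece j c : (fsh j c \in piece las j) = (c \in ydiag (la j)).
Proof. by rewrite piece_fsh mem_map //; apply: fsh_inj. Qed.

Lemma la_part j : j < b -> is_partition (la j) /\ la j != [::].
Proof. by move=> Hj; have /andP[] := all_nthP [::] Hpart j Hj. Qed.

Lemma row_off_lt j j' : j < j' -> j' < b -> row_off las j' + size (la j') <= row_off las j.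
Proof.
move=> Hjj' Hj'; rewrite /row_off.
have -> : b - j.+1 = (j' - j.+1) + (b - j') by lia.
rewrite iotaD map_cat sumn_cat.
have -> : j.+1 + (j' - j.+1) = j' by lia.
have -> : b - j' = (b - j'.+1).+1 by lia.
rewrite /=; lia.
Qed.

Lemma col_off_lt j j' : j < j' -> col_off las j + head 0 (la j) <= col_off las j'.
Proof.
move=> Hjj'; rewrite /col_off.
have -> : j' = j + (j' - j) by lia.
rewrite iotaD map_cat sumn_cat leq_add2l.
have -> : j' - j = (j' - j.+1).+1 by lia.
by rewrite /= leq_addr.
Qed.

Lemma fsh_row j c : c \in ydiag (la j) ->
  row_off las j <= (fsh j c).1 < row_off las j + size (la j).
Proof. by rewrite mem_ydiag /= => /andP[H _]; rewrite leq_addl addnC ltn_add2l. Qed.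

Lemma fsh_col j c : j < b -> c \in ydiag (la j) ->
  col_off las j <= (fsh j c).2 < col_off las j + head 0 (la j).
Proof.
move=> Hj; rewrite mem_ydiag /= => /andP[H1 H2]; rewrite leq_addl addnC ltn_add2l.
exact: leq_trans H2 (part_nth_head (la_part Hj).1 H1).
Qed.

Lemma same_row j j' c c' : j < b -> j' < b -> c \in ydiag (la j) -> c' \in ydiag (la j') ->
  (fsh j c).1 = (fsh j' c').1 -> j = j'.
Proof.
move=> Hj Hj' Hc Hc' E.
have := fsh_row Hc; have := fsh_row Hc'; rewrite E.
case: (ltngtP j j') => // H.
- have := row_off_lt H Hj'; lia.
- have := row_off_lt H Hj; lia.
Qed.

Lemma same_col j j' c c' : j < b -> j' < b -> c \in ydiag (la j) -> c' \in ydiag (la j') ->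
  (fsh j c).2 = (fsh j' c').2 -> j = j'.
Proof.
move=> Hj Hj' Hc Hc' E.
have := fsh_col Hj Hc; have := fsh_col Hj' Hc'; rewrite E.
case: (ltngtP j j') => // H.
- have := col_off_lt H; lia.
- have := col_off_lt H; lia.
Qed.

Lemma mem_sh x : reflect (exists j, exists2 c, j < b /\ c \in ydiag (la j) & x = fsh j c)
  (x \in skew_union las).
Proof.
apply: (iffP flatten_mapP) => [[j] | [j [c [Hj Hc] ->]]].
  by rewrite mem_iota /= => Hj /mapP [c Hc ->]; exists j, c.
by exists j; [rewrite mem_iota | rewrite mem_piece].
Qed.

Lemma fsh_sh j c : j < b -> c \in ydiag (la j) -> fsh j c \in skew_union las.
Proof. by move=> Hj Hc; apply/mem_sh; exists j, c. Qed.

Lemma nb_right j c : j < b -> c \in ydiag (la j) ->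
  (fsh j (c.1, c.2.+1) \in skew_union las) = ((c.1, c.2.+1) \in ydiag (la j)).
Proof.
move=> Hj Hc; apply/idP/idP; last exact: fsh_sh.
case/mem_sh => j0 [c0 [Hj0 Hc0] E].
have Ej : j = j0.
  apply: (same_row Hj Hj0 Hc Hc0); by rewrite -E.
by subst j0; rewrite (fsh_inj E).
Qed.

Lemma nb_down j c : j < b -> c \in ydiag (la j) ->
  (fsh j (c.1.+1, c.2) \in skew_union las) = ((c.1.+1, c.2) \in ydiag (la j)).
Proof.
move=> Hj Hc; apply/idP/idP; last exact: fsh_sh.
case/mem_sh => j0 [c0 [Hj0 Hc0] E].
have Ej : j = j0.
  apply: (same_col Hj Hj0 Hc Hc0); by rewrite -E.
by subst j0; rewrite (fsh_inj E).
Qed.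

Lemma fsh_piece_eq j j' c c' : j < b -> j' < b -> c \in ydiag (la j) -> c' \in ydiag (la j') ->
  fsh j c = fsh j' c' -> j = j' /\ c = c'.
Proof.
move=> Hj Hj' Hc Hc' E.
have Ej := same_row Hj Hj' Hc Hc' (f_equal fst E); subst j'.
by split => //; apply: fsh_inj E.
Qed.

Lemma union_tab_fsh Us j c : j < b -> c \in ydiag (la j) ->
  union_tab las Us (fsh j c) = Us j c.
Proof.
move=> Hj Hc; rewrite /union_tab.
have : j \in iota 0 b by rewrite mem_iota.
have : forall i, i \in iota 0 b -> fsh j c \in piece las i -> i = j.
  move=> i; rewrite mem_iota /= => Hi; rewrite piece_fsh => /mapP [c' Hc' E].
  by have [] := fsh_piece_eq Hi Hj Hc' Hc (esym E).
elim: (iota 0 b) => //= i s IH Hu.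
case: ifP => [Hin _ | Hin].
  have Ei := Hu i (mem_head _ _) Hin; subst i.
  by rewrite /fsh /= !addnK [in RHS](surjective_pairing c).
rewrite inE => /orP [/eqP Ei | Hs].
  by subst i; rewrite mem_piece Hc in Hin.
apply: IH Hs => i' Hi'; apply: Hu; by rewrite inE Hi' orbT.
Qed.

Lemma union_tab_out Us x : x \notin skew_union las -> union_tab las Us x = 0.
Proof.
move=> Hx; rewrite /union_tab.
have : forall i, i \in iota 0 b -> x \notin piece las i.
  move=> i Hi; apply: contra Hx => H; apply/flatten_mapP; by exists i.
elim: (iota 0 b) => //= i s IH Hu.
rewrite (negbTE (Hu i (mem_head _ _))); apply: IH => i' Hi'; apply: Hu; by rewrite inE Hi' orbT.
Qed.

Lemma size_sh : size (skew_union las) = sumn [seq sumn l | l <- las].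
Proof.
rewrite /skew_union size_flatten /shape -map_comp.
rewrite (eq_map (g := fun j => sumn (la j))); last first.
  by move=> i /=; rewrite size_map size_ydiag.
by rewrite (map_comp sumn) -/(mkseq _ _) mkseq_nth.
Qed.

Lemma uniq_sh : uniq (skew_union las).
Proof.
rewrite /skew_union.
have : forall i, i \in iota 0 b -> i < b by move=> i; rewrite mem_iota.
have : uniq (iota 0 b) := iota_uniq _ _.
elim: (iota 0 b) => //= i s IH /andP [Hi Hs] Hb.
rewrite cat_uniq IH ?Hs; last by move=> i' H; apply: Hb; rewrite inE H orbT.
rewrite piece_fsh map_inj_uniq ?uniq_ydiag ?andbT; last exact: fsh_inj.
apply/hasPn => x /flatten_mapP [i' Hi'] /mapP [c' Hc' ->].
apply/negP => /mapP [c Hc E].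
have Hi'b : i' < b by apply: Hb; rewrite inE Hi' orbT.
have [Ei _] := fsh_piece_eq (Hb _ (mem_head _ _)) Hi'b Hc Hc' (esym E).
by subst i'; rewrite Hi' in Hi.
done.
Qed.

End Geom.

Definition Rel (d : nat) (w : seq nat) (j v t : nat) : Prop :=
  [/\ 0 < v, nth d w v.-1 = j & count (pred1 j) (take v w) = t].

Lemma count_take_mono (P : pred nat) w i i' : i <= i' -> count P (take i w) <= count P (take i' w).
Proof.
move=> H; rewrite -(cat_take_drop i (take i' w)) count_cat take_takel //; exact: leq_addr.
Qed.

Lemma Rel_size d w j v t : j != d -> Rel d w j v t -> v <= size w.
Proof.
move=> Hj [Hv Hn _]; case: (leqP v (size w)) => // H.
by rewrite nth_default in Hn; [rewrite Hn eqxx in Hj | lia].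
Qed.

Lemma Rel_lt d w j v t v' t' : j != d -> Rel d w j v t -> Rel d w j v' t' -> (v < v') = (t < t').
Proof.
move=> Hj R1 R2; have Hs2 := Rel_size Hj R2; case: R1 R2 => [Hv Hn Hc] [Hv' Hn' Hc'].
case: (ltnP v v') => H.
  apply/esym; rewrite -Hc -Hc'.
  have -> : v' = v'.-1.+1 by lia.
  rewrite (take_nth d); last by rewrite prednK.
  rewrite -cats1 count_cat /= Hn' eqxx addn1 ltnS; apply: count_take_mono; by rewrite -ltnS prednK.
by rewrite -Hc -Hc' ltnNge (count_take_mono _ w H).
Qed.

Lemma Rel_inj d w j v t v' t' : j != d -> Rel d w j v t -> Rel d w j v' t' -> (v == v') = (t == t').
Proof.
move=> Hj R1 R2; rewrite !eqn_leq (leqNgt v) (leqNgt v') (leqNgt t) (leqNgt t').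
by rewrite (Rel_lt Hj R1 R2) (Rel_lt Hj R2 R1).
Qed.

Lemma Rel_rot_other d w j v t : j != d -> j != nth d w 0 -> Rel d w j v t ->
  Rel d (rot 1 w) j v.-1 t.
Proof.
move=> Hj Hj0 R; have Hs := Rel_size Hj R; case: R => Hv Hn Hc.
case: w Hj0 Hs Hn Hc => [|x w'] /= Hj0 Hs Hn Hc; first by case: v Hv Hs {Hn Hc}.
move: Hv Hs Hn Hc; case: v => [|[|v]] // _ /= Hs Hn Hc.
  by rewrite Hn eqxx in Hj0.
rewrite rot1_cons; split => //.
  by rewrite nth_rcons -ltnS Hs.
rewrite -cats1 takel_cat // -Hc /= eq_sym (negbTE Hj0).
by [].
Qed.

Lemma Rel_rot_head d w j v t : j != d -> j = nth d w 0 -> Rel d w j v t -> 1 < t ->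
  Rel d (rot 1 w) j v.-1 t.-1.
Proof.
move=> Hj Hj0 R Ht; have Hs := Rel_size Hj R; case: R => Hv Hn Hc.
case: w Hj0 Hs Hn Hc => [|x w'] /= Hj0 Hs Hn Hc; first by case: v Hv Hs {Hn Hc}.
subst x.
move: Hv Hs Hn Hc; case: v => [|[|v]] // _ /= Hs Hn Hc.
  by rewrite -Hc take0 /= eqxx in Ht.
rewrite rot1_cons; split => //.
  by rewrite nth_rcons -ltnS Hs.
by rewrite -cats1 takel_cat // -Hc /= eqxx.
Qed.

Lemma Rel_rot_last d w j : j != d -> j = nth d w 0 -> Rel d (rot 1 w) j (size w) (count (pred1 j) w).
Proof.
move=> Hj Hj0; case: w Hj0 => [|x w'] /= Hj0; first by rewrite Hj0 eqxx in Hj.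
rewrite rot1_cons; split => //.
  by rewrite nth_rcons ltnn eqxx.
by rewrite take_oversize ?size_rcons // -cats1 count_cat /= addn0 addnC Hj0.
Qed.

Section JDT.
Variables (Y sh : seq cell) (f : cell -> cell).
Hypothesis finj : injective f.
Hypothesis fR : forall c, f (c.1, c.2.+1) = ((f c).1, (f c).2.+1).
Hypothesis fD : forall c, f (c.1.+1, c.2) = ((f c).1.+1, (f c).2).
Hypothesis HR : forall c, c \in Y -> (f (c.1, c.2.+1) \in sh) = ((c.1, c.2.+1) \in Y).
Hypothesis HD : forall c, c \in Y -> (f (c.1.+1, c.2) \in sh) = ((c.1.+1, c.2) \in Y).
Variable RelP : nat -> nat -> Prop.
Hypothesis Hcmp : forall v t v' t', RelP v t -> RelP v' t' -> (v < v') = (t < t').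

Lemma upd_rel T S e r : r \in Y -> (forall c, c \in Y -> RelP (T (f c)) (S c)) ->
  forall c, c \in Y -> RelP (upd T (f e) (T (f r)) (f c)) (upd S e (S r) c).
Proof.
move=> Hr HT c Hc; rewrite /upd (inj_eq finj); case: eqP => _; exact: HT.
Qed.

Lemma jdt_sim fuel : forall T S e, e \in Y -> (forall c, c \in Y -> RelP (T (f c)) (S c)) ->
  [/\ (jdt sh T (f e) fuel).2 = f (jdt Y S e fuel).2, (jdt Y S e fuel).2 \in Y,
      (forall c, c \in Y -> RelP ((jdt sh T (f e) fuel).1 (f c)) ((jdt Y S e fuel).1 c)) &
      (forall x, (forall c, c \in Y -> x != f c) -> (jdt sh T (f e) fuel).1 x = T x)].
Proof.
elim: fuel => [|fu IH] T S e He HT; first by split.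
have Hout : forall (T' : tableau) v x, (forall c, c \in Y -> x != f c) ->
   (upd T' (f e) v) x = T' x.
  by move=> T' v x Hx; rewrite /upd (negbTE (Hx e He)).
rewrite /= -fR -fD (HR He) (HD He).
case Hr: ((e.1, e.2.+1) \in Y); case Hd: ((e.1.+1, e.2) \in Y) => /=.
- rewrite (Hcmp (HT _ Hr) (HT _ Hd)).
  case: (S (e.1, e.2.+1) < S (e.1.+1, e.2)).
    have [H1 H2 H3 H4] := IH _ _ _ Hr (@upd_rel _ _ e _ Hr HT).
    by split => // x Hx; rewrite H4 // Hout.
  have [H1 H2 H3 H4] := IH _ _ _ Hd (@upd_rel _ _ e _ Hd HT).
  by split => // x Hx; rewrite H4 // Hout.
- have [H1 H2 H3 H4] := IH _ _ _ Hr (@upd_rel _ _ e _ Hr HT).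
  by split => // x Hx; rewrite H4 // Hout.
- have [H1 H2 H3 H4] := IH _ _ _ Hd (@upd_rel _ _ e _ Hd HT).
  by split => // x Hx; rewrite H4 // Hout.
- by split.
Qed.

End JDT.

Section JDTY.
Variable Y : seq cell.

Definition Iinv (S : tableau) (h : cell) (q : nat) :=
  (forall c c', c \in Y -> c' \in Y -> c != h -> c' != h -> S c = S c' -> c = c') /\
  (forall c, c \in Y -> c != h -> 1 < S c <= q).

Lemma jdt_Iinv fuel : forall S e q, e \in Y -> Iinv S e q ->
  (jdt Y S e fuel).2 \in Y /\ Iinv (jdt Y S e fuel).1 (jdt Y S e fuel).2 q.
Proof.
elim: fuel => [|fu IH] S e q He HI //=.
have step : forall r, r \in Y -> r != e -> Iinv (upd S e (S r)) r q.
  move=> r Hr Hre; case: HI => HI1 HI2; split.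
    move=> c c' Hc Hc' Hcr Hc'r; rewrite /upd.
    case: (eqVneq c e) => [Ece | Hce]; case: (eqVneq c' e) => [Ec'e | Hc'e].
    - by rewrite Ece Ec'e.
    - by move=> E; have Er := HI1 r c' Hr Hc' Hre Hc'e E; rewrite Er eqxx in Hc'r.
    - by move=> E; have Er := HI1 r c Hr Hc Hre Hce (esym E); rewrite Er eqxx in Hcr.
    - exact: HI1.
  move=> c Hc Hcr; rewrite /upd; case: (eqVneq c e) => [_ | Hce].
    exact: HI2.
  exact: HI2.
have Hne1 : (e.1, e.2.+1) != e by apply/eqP => /(f_equal snd) /= E; exact: (n_Sn _ (esym E)).
have Hne2 : (e.1.+1, e.2) != e by apply/eqP => /(f_equal fst) /= E; exact: (n_Sn _ (esym E)).
case Hr: ((e.1, e.2.+1) \in Y); case Hd: ((e.1.+1, e.2) \in Y) => /=.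
- by case: (_ < _); apply: IH => //; apply: step.
- by apply: IH => //; apply: step.
- by apply: IH => //; apply: step.
- by [].
Qed.

Lemma jdt_fuel K : (forall c, c \in Y -> c.1 + c.2 < K) -> forall fuel fuel' S e,
  e \in Y -> K <= e.1 + e.2 + fuel -> K <= e.1 + e.2 + fuel' -> jdt Y S e fuel = jdt Y S e fuel'.
Proof.
move=> HK; elim=> [|fu IH] fuel' S [a b] He /= H1 H2; have /= := HK _ He.
  lia.
case: fuel' H2 => [|fu'] /= H2 Hab; first by lia.
case Hr: ((a, b.+1) \in Y); case Hd: ((a.+1, b) \in Y) => //=.
- by case: (_ < _); apply: IH => //=; lia.
- by apply: IH => //=; lia.
- by apply: IH => //=; lia.
Qed.

End JDTY.

Lemma uniq_map_inj (T1 T2 : eqType) (f : T1 -> T2) s :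
  uniq (map f s) -> {in s &, injective f}.
Proof.
elim: s => //= a s IH /andP [Ha Hu] x y.
rewrite !inE => /orP [/eqP -> | Hx] /orP [/eqP -> | Hy] // E.
- by rewrite E (map_f f Hy) in Ha.
- by rewrite -E (map_f f Hx) in Ha.
- exact: IH.
Qed.

Lemma perm_iota_char (s : seq nat) q : uniq s -> {subset s <= iota 1 q} -> size s = q ->
  perm_eq s (iota 1 q).
Proof.
move=> Hu Hsub Hs; have Hle : size (iota 1 q) <= size s by rewrite size_iota Hs.
have [_ Hm] := uniq_min_size Hu Hsub Hle.
by apply: uniq_perm => //; apply: iota_uniq.
Qed.

Section PrY.
Variable Y : seq cell.
Hypothesis HuY : uniq Y.
Local Notation q := (size Y).

Definition pfill (S : tableau) := perm_eq (map S Y) (iota 1 q).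

Lemma pfill_inj S : pfill S -> {in Y &, injective S}.
Proof. by move=> H; apply: uniq_map_inj; rewrite (perm_uniq H) iota_uniq. Qed.

Lemma pfill_range S c : pfill S -> c \in Y -> 0 < S c <= q.
Proof.
move=> H Hc; have : S c \in iota 1 q by rewrite -(perm_mem H) map_f.
by rewrite mem_iota add1n ltnS.
Qed.

Definition c1of (S : tableau) := nth (0, 0) Y (find (fun c => S c == 1) Y).

Lemma c1of_spec S : pfill S -> 0 < q -> [/\ c1of S \in Y, S (c1of S) = 1 & Iinv Y S (c1of S) q].
Proof.
move=> H Hq.
have Hhas : has (fun c => S c == 1) Y.
  have : 1 \in map S Y by rewrite (perm_mem H) mem_iota leqnn add1n.
  by case/mapP => c Hc E; apply/hasP; exists c => //; rewrite -E.
have Hin : c1of S \in Y by rewrite /c1of mem_nth // -has_find.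
have H1 : S (c1of S) = 1 by apply/eqP; apply: (nth_find _ Hhas).
split => //; split.
  by move=> c c' Hc Hc' _ _; apply: pfill_inj.
move=> c Hc Hne; have /andP [Ha Hb] := pfill_range H Hc; rewrite Hb andbT.
case: (S c) Ha (pfill_inj H Hc Hin) => [|[|x]] //= _ Hi.
by rewrite -H1 in Hi; rewrite (Hi erefl) eqxx in Hne.
Qed.

Lemma promotion_pfill S : pfill S -> 0 < q ->
  pfill (promotion Y S) /\ (forall c, c \notin Y -> promotion Y S c = 0).
Proof.
move=> H Hq; have [Hin H1 HI] := c1of_spec H Hq.
rewrite /promotion -/(c1of S).
have [He' [HI1 HI2]] := jdt_Iinv q Hin HI.
case: (jdt Y S (c1of S) q) He' HI1 HI2 => S' e' /= He' HI1 HI2.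
split; last by move=> c /negbTE ->.
apply: perm_iota_char; last by rewrite size_map.
- rewrite map_inj_in_uniq // => c c' Hc Hc'; rewrite Hc Hc'.
  case: (eqVneq c e') => [-> | Hce]; case: (eqVneq c' e') => [-> | Hc'e] //.
  + have := HI2 _ Hc' Hc'e; lia.
  + have := HI2 _ Hc Hce; lia.
  + have := HI2 _ Hc Hce; have := HI2 _ Hc' Hc'e => A B E.
    apply: HI1 => //; lia.
- move=> x /mapP [c Hc ->]; rewrite Hc mem_iota.
  case: (eqVneq c e') => [_ | Hce]; first lia.
  have := HI2 _ Hc Hce; lia.
Qed.

End PrY.

Section Main.
Variable las : seq (seq nat).
Hypothesis Hpart : all (fun la => is_partition la && (la != [::])) las.
Local Notation b := (size las).
Local Notation la j := (nth [::] las j).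
Local Notation Y j := (ydiag (nth [::] las j)).
Local Notation q j := (sumn (nth [::] las j)).
Local Notation sh := (skew_union las).
Local Notation n := (sumn [seq sumn l | l <- las]).
Local Notation f := (fsh las).

Record INV (T : tableau) (S : nat -> tableau) (w : seq nat) : Prop := MkINV {
  I_size : size w = n;
  I_all : all (fun x => x < b) w;
  I_cnt : forall j, j < b -> count (pred1 j) w = q j;
  I_S : forall j, j < b -> pfill (Y j) (S j) /\ forall c, c \notin Y j -> S j c = 0;
  I_rel : forall j c, j < b -> c \in Y j -> Rel b w j (T (f j c)) (S j c);
  I_out : forall x, x \notin sh -> T x = 0 }.

Lemma jb j : j < b -> j != b.
Proof. by move=> H; rewrite neq_ltn H. Qed.

Lemma INV_T_inj T S w : INV T S w -> {in sh &, injective T}.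
Proof.
case=> _ _ _ HS HR _ x y /mem_sh [j [c [Hj Hc] ->]] /mem_sh [j' [c' [Hj' Hc'] ->]] E.
have R1 := HR _ _ Hj Hc; have R2 := HR _ _ Hj' Hc'.
have Ejj : j = j'.
  case: R1 => _ E1 _; case: R2 => _ E2 _; by rewrite -E1 -E2 E.
subst j'; rewrite -E in R2.
have := Rel_inj (jb Hj) R1 R2; rewrite eqxx => /esym /eqP Et.
by rewrite (pfill_inj (HS _ Hj).1 Hc Hc' Et).
Qed.

Lemma INV_T_range T S w x : INV T S w -> x \in sh -> 0 < T x <= n.
Proof.
case=> Hs _ _ _ HR _ /mem_sh [j [c [Hj Hc] ->]].
have R := HR _ _ Hj Hc; have := Rel_size (jb Hj) R; case: R => -> _ _.
by rewrite Hs.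
Qed.

Lemma INV_T_perm T S w : INV T S w -> perm_eq (map T sh) (iota 1 n).
Proof.
move=> HI; apply: perm_iota_char.
- by rewrite map_inj_in_uniq ?(uniq_sh Hpart) //; apply: INV_T_inj HI.
- move=> v /mapP [x Hx ->]; rewrite mem_iota add1n ltnS; exact: INV_T_range HI Hx.
- by rewrite size_map size_sh.
Qed.


Lemma fR j c : f j (c.1, c.2.+1) = ((f j c).1, (f j c).2.+1).
Proof. by rewrite /fsh /= addSn. Qed.
Lemma fD j c : f j (c.1.+1, c.2) = ((f j c).1.+1, (f j c).2).
Proof. by rewrite /fsh /= addSn. Qed.

Lemma diag_bound j c : j < b -> c \in Y j -> c.1 + c.2 < q j.
Proof.
move=> Hj; rewrite mem_ydiag => /andP [H1 H2].
have [Hp Hne] := la_part Hpart Hj.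
have := part_nth_head Hp H1; have := part_bound Hp Hne; lia.
Qed.

Definition nextS (S : nat -> tableau) j0 := fun j => if j == j0 then promotion (Y j) (S j) else S j.

Lemma INV_step T S w : INV T S w -> 0 < n ->
  INV (promotion sh T) (nextS S (nth b w 0)) (rot 1 w).
Proof.
move=> HI Hn; case: (HI) => Hs Hall Hcnt HS HR Hout.
set j0 := nth b w 0.
have Hw0 : 0 < size w by rewrite Hs.
have Hj0 : j0 < b by apply: (all_nthP b Hall).
have [HSj0 HSj0out] := HS _ Hj0.
have HuY := uniq_ydiag (la j0).
have HqY := size_ydiag (la j0).
have Hq0 : 0 < size (Y j0).
  rewrite HqY -Hcnt // -has_count; apply/hasP; exists j0; last by rewrite /= eqxx.
  by rewrite /j0 mem_nth.
have [Hc1 Hc1v HI1] := c1of_spec HSj0 Hq0.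
set c1 := c1of (Y j0) (S j0) in Hc1 Hc1v HI1.
have R1 := HR _ _ Hj0 Hc1; rewrite Hc1v in R1.
have R0 : Rel b w j0 1 1.
  rewrite /j0 /Rel; case: (w) Hw0 => [|x w'] // _.
  by apply: And3; [ done | done | rewrite /= take0 eqxx].
have HT1 : T (f j0 c1) = 1.
  by move: (Rel_inj (jb Hj0) R1 R0); rewrite eqxx => /eqP.
have Hfind : nth (0,0) sh (find (fun c => T c == 1) sh) = f j0 c1.
  have Hhas : has (fun c => T c == 1) sh.
    by apply/hasP; exists (f j0 c1); [exact: fsh_sh | rewrite HT1].
  apply: (INV_T_inj HI); first by rewrite mem_nth // -has_find.
    exact: fsh_sh.
  by rewrite (eqP (nth_find _ Hhas)) HT1.
have Hqn : q j0 <= n by rewrite -Hcnt // -Hs count_size.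
have Hfuel : jdt (Y j0) (S j0) c1 n = jdt (Y j0) (S j0) c1 (q j0).
  apply: (@jdt_fuel (Y j0) (q j0)) => //.
  - by move=> c; apply: diag_bound.
  - by apply: (leq_trans Hqn); rewrite leq_addl.
  - by rewrite leq_addl.
have HRel : forall c, c \in Y j0 -> Rel b w j0 (T (f j0 c)) (S j0 c) by move=> c; apply: HR.
have [E1 E2 E3 E4] := @jdt_sim (Y j0) sh (f j0) (@fsh_inj las j0) (fR j0) (fD j0)
   (fun c Hc => nb_right Hpart Hj0 Hc) (fun c Hc => nb_down Hpart Hj0 Hc) (Rel b w j0)
   (fun v t v' t' => Rel_lt (jb Hj0)) n T (S j0) c1 Hc1 HRel.
have [He' [HI1a HI1b]] := jdt_Iinv (q j0) Hc1 HI1.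
have Hpr := promotion_pfill HuY HSj0 Hq0.
have Ep : promotion (Y j0) (S j0) = (let (S'', e'') := jdt (Y j0) (S j0) c1 (q j0) in
   fun c => if c \in Y j0 then (if c == e'' then q j0 else S'' c - 1) else 0).
  by rewrite /promotion -/(c1of (Y j0) (S j0)) -/c1 HqY.
rewrite /nextS.
case: Hpr => Hpr1 Hpr2.
rewrite {1}/promotion Hfind size_sh.
move: E1 E2 E3 E4 He' HI1a HI1b Ep; rewrite Hfuel.
case: (jdt (Y j0) (S j0) c1 (q j0)) => S' e'.
case: (jdt sh T (f j0 c1) n) => T' E' /= -> _ E3 E4 He' HI1a HI1b Ep.
have Prot : perm_eq (rot 1 w) w by rewrite perm_rot.
constructor.
- by rewrite size_rot.
- by rewrite (perm_all _ Prot).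
- by move=> j Hj; rewrite (permP Prot); apply: Hcnt.
- move=> j Hj; case: eqP => [-> | _]; last exact: HS.
  by split.
- move=> j c Hj Hc; rewrite (fsh_sh Hj Hc).
  case: (eqVneq j j0) => [Ej | Hjj0].
    subst j; rewrite Ep Hc (inj_eq (@fsh_inj las j0)).
    case: (eqVneq c e') => [Ece | Hce] /=.
      by rewrite -Hs -(Hcnt _ Hj0); apply: Rel_rot_last => //; apply: jb.
    rewrite !subn1; apply: Rel_rot_head => //; first exact: jb.
      exact: E3.
    by have := HI1b _ Hc Hce; case/andP.
  rewrite ?(negbTE Hjj0).
  have Hx : forall c', c' \in Y j0 -> f j c != f j0 c'.
    move=> c' Hc'; apply/eqP => E.
    by have [Ejj _] := fsh_piece_eq Hpart Hj Hj0 Hc Hc' E; rewrite Ejj eqxx in Hjj0.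
  rewrite (negbTE (Hx _ He')) E4 // subn1.
  apply: Rel_rot_other; [exact: jb | exact: Hjj0 | exact: HR].
- by move=> x /negbTE ->.
Qed.

End Main.

Section Main.
Variable las : seq (seq nat).
Hypothesis Hpart : all (fun la => is_partition la && (la != [::])) las.
Local Notation b := (size las).
Local Notation la j := (nth [::] las j).
Local Notation Y j := (ydiag (nth [::] las j)).
Local Notation q j := (sumn (nth [::] las j)).
Local Notation sh := (skew_union las).
Local Notation n := (sumn [seq sumn l | l <- las]).
Local Notation f := (fsh las).


Local Notation INV := (INV las).

Definition iterS (S : nat -> tableau) (w : seq nat) m :=
  fun j => iter (count (pred1 j) (take m w)) (promotion (Y j)) (S j).

Lemma INV_iter T S w m : INV T S w -> 0 < n -> m <= n ->
  INV (iter m (promotion sh) T) (iterS S w m) (rot m w).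
Proof.
move=> HI Hn; elim: m => [|m IH] Hm.
  have -> : iterS S w 0 = S by apply: functional_extensionality => j; rewrite /iterS take0.
  by rewrite rot0.
have Hs := I_size HI.
have H := INV_step Hpart (IH (ltnW Hm)) Hn.
have E1 : rot 1 (rot m w) = rot m.+1 w by rewrite -rotD // Hs.
have E2 : nth (size las) (rot m w) 0 = nth (size las) w m.
  by rewrite /rot nth_cat size_drop subn_gt0 Hs Hm nth_drop addn0.
have E3 : nextS las (iterS S w m) (nth (size las) w m) = iterS S w m.+1.
  apply: functional_extensionality => j; rewrite /nextS /iterS (take_nth (size las)) ?Hs //.
  rewrite -cats1 count_cat /= addn0 eq_sym.
  by case: eqP => _; rewrite ?addn1 ?addn0.
by rewrite -E1 -E3 -E2.
Qed.

Lemma Rel_pos d w j v t : j != d -> Rel d w j v t -> 0 < t.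
Proof.
move=> Hj R; have Hs := Rel_size Hj R; case: R => Hv Hn <-.
have -> : v = v.-1.+1 by rewrite prednK.
rewrite (take_nth d); last by rewrite prednK.
by rewrite -cats1 count_cat /= Hn eqxx addn1.
Qed.

Lemma Rel_le d w j v t : Rel d w j v t -> t <= count (pred1 j) w.
Proof.
case=> _ _ <-; rewrite -{2}(cat_take_drop v w) count_cat; exact: leq_addr.
Qed.

Lemma INV_uniq T S w S2 w2 : INV T S w -> INV T S2 w2 -> w = w2 /\ (forall j, j < b -> S j = S2 j).
Proof.
move=> HI HI2.
have Ew : w = w2.
  apply: (@eq_from_nth _ b); first by rewrite (I_size HI) (I_size HI2).
  move=> i Hi; set j := nth b w i.
  have Hj : j < b by apply: (all_nthP b (I_all HI)).
  have R0 : Rel b w j i.+1 (count (pred1 j) (take i.+1 w)) by [].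
  have [HS _] := I_S HI Hj.
  have Ht : count (pred1 j) (take i.+1 w) \in map (S j) (Y j).
    rewrite (perm_mem HS) mem_iota add1n ltnS (Rel_pos (jb Hj) R0) size_ydiag -(I_cnt HI Hj).
    exact: Rel_le R0.
  case/mapP: Ht => c Hc Et.
  have R1 := I_rel HI Hj Hc; rewrite Et in R0.
  have := Rel_inj (jb Hj) R1 R0; rewrite eqxx => /eqP Ev.
  have [_ E2 _] := I_rel HI2 Hj Hc; by rewrite Ev in E2.
split => // j Hj; subst w2; apply: functional_extensionality => c.
case: (boolP (c \in Y j)) => Hc.
  by case: (I_rel HI Hj Hc) => _ _ <-; case: (I_rel HI2 Hj Hc) => _ _ <-.
by rewrite ((I_S HI Hj).2 _ Hc) ((I_S HI2 Hj).2 _ Hc).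
Qed.

Lemma INV_T_eq T T2 S w : INV T S w -> INV T2 S w -> T = T2.
Proof.
move=> HI HI2; apply: functional_extensionality => x.
case: (boolP (x \in sh)) => Hx; last by rewrite (I_out HI Hx) (I_out HI2 Hx).
case/mem_sh: Hx => j [c [Hj Hc] ->].
have R1 := I_rel HI Hj Hc; have R2 := I_rel HI2 Hj Hc.
by have := Rel_inj (jb Hj) R1 R2; rewrite eqxx => /eqP.
Qed.

Lemma INV_SYT T S w : INV T S w -> (SYT sh T <-> forall j, j < b -> SYT (Y j) (S j)).
Proof.
move=> HI; split.
  case=> H1 H2 H3 H4 j Hj; have [HS HS0] := I_S HI Hj; split => //.
  - move=> c c' Hc Hc' E Hlt; rewrite -(Rel_lt (jb Hj) (I_rel HI Hj Hc) (I_rel HI Hj Hc')).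
    by apply: H3; [exact: fsh_sh | exact: fsh_sh | rewrite /fsh /= E | rewrite /fsh /= ltn_add2r].
  - move=> c c' Hc Hc' E Hlt; rewrite -(Rel_lt (jb Hj) (I_rel HI Hj Hc) (I_rel HI Hj Hc')).
    by apply: H4; [exact: fsh_sh | exact: fsh_sh | rewrite /fsh /= E | rewrite /fsh /= ltn_add2r].
move=> HS; split.
- exact: I_out HI.
- by rewrite size_sh; apply: (INV_T_perm Hpart HI).
- move=> x x' /mem_sh [j [c [Hj Hc] ->]] /mem_sh [j' [c' [Hj' Hc'] ->]] E Hlt.
  have Ej := same_row Hpart Hj Hj' Hc Hc' E; subst j'.
  rewrite (Rel_lt (jb Hj) (I_rel HI Hj Hc) (I_rel HI Hj Hc')).
  case: (HS _ Hj) => _ _ H3 _; apply: H3 => //.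
    by move: E; rewrite /fsh /= => /addIn.
  by move: Hlt; rewrite /fsh /= ltn_add2r.
- move=> x x' /mem_sh [j [c [Hj Hc] ->]] /mem_sh [j' [c' [Hj' Hc'] ->]] E Hlt.
  have Ej := same_col Hpart Hj Hj' Hc Hc' E; subst j'.
  rewrite (Rel_lt (jb Hj) (I_rel HI Hj Hc) (I_rel HI Hj Hc')).
  case: (HS _ Hj) => _ _ _ H4; apply: H4 => //.
    by move: E; rewrite /fsh /= => /addIn.
  by move: Hlt; rewrite /fsh /= ltn_add2r.
Qed.

End Main.

Lemma count_mem_sub (M s : seq nat) : uniq M -> {subset M <= s} -> uniq s ->
  count (mem M) s = size M.
Proof.
move=> HuM Hsub Hus; rewrite -size_filter; apply: perm_size.
apply: uniq_perm => //; first exact: filter_uniq.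
by move=> x; rewrite mem_filter /=; case: (boolP (x \in M)) => // /Hsub ->.
Qed.

Lemma find_iota_pred1 j b : j < b -> find (pred1 j) (iota 0 b) = j.
Proof.
move=> Hj; have Hs : j < size (iota 0 b) by rewrite size_iota.
have := index_uniq 0 Hs (iota_uniq 0 b).
by rewrite nth_iota // add0n.
Qed.

Section Exist.
Variable las : seq (seq nat).
Hypothesis Hpart : all (fun la => is_partition la && (la != [::])) las.
Local Notation b := (size las).
Local Notation la j := (nth [::] las j).
Local Notation Y j := (ydiag (nth [::] las j)).
Local Notation q j := (sumn (nth [::] las j)).
Local Notation sh := (skew_union las).
Local Notation n := (sumn [seq sumn l | l <- las]).
Local Notation f := (fsh las).
Local Notation INV := (INV las).

Lemma INV_exists T : SYT sh T -> exists S w, INV T S w.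
Proof.
case=> H0 Hperm Hrow Hcol.
have Hinj : {in sh &, injective T}.
  by apply: uniq_map_inj; rewrite (perm_uniq Hperm) iota_uniq.
have Hrange : forall x, x \in sh -> 0 < T x <= n.
  move=> x Hx; have : T x \in iota 1 (size sh) by rewrite -(perm_mem Hperm) map_f.
  by rewrite mem_iota add1n ltnS size_sh.
have Hmemp : forall j i c, j < b -> i < b -> c \in Y j ->
    (T (f j c) \in map T (piece las i)) = (i == j).
  move=> j i c Hj Hi Hc; apply/idP/eqP => [/mapP [y Hy E] | ->]; last first.
    by rewrite map_f // mem_piece.
  move: Hy; rewrite piece_fsh => /mapP [c' Hc' Ey]; subst y.
  have := Hinj _ _ (fsh_sh Hi Hc') (fsh_sh Hj Hc) (esym E).
  by case/(fsh_piece_eq Hpart Hi Hj Hc' Hc).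
pose lab v := find (fun j => v \in map T (piece las j)) (iota 0 b).
have Hlab : forall j c, j < b -> c \in Y j -> lab (T (f j c)) = j.
  move=> j c Hj Hc; rewrite /lab; rewrite -[RHS](find_iota_pred1 Hj); apply: eq_in_find => i.
  rewrite mem_iota add0n => /andP [_ Hi]; by rewrite /= Hmemp.
have Hv : forall v, v \in iota 1 n -> exists j c, [/\ j < b, c \in Y j & v = T (f j c)].
  move=> v; rewrite -size_sh -(perm_mem Hperm) => /mapP [x /mem_sh [j [c [Hj Hc] ->]] ->].
  by exists j, c.
pose w := map lab (iota 1 n).
have Hsw : size w = n by rewrite size_map size_iota.
have Hw : forall v, 0 < v <= n -> nth b w v.-1 = lab v.
  move=> v /andP [H1 H2]; rewrite (nth_map 0); last by rewrite size_iota; lia.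
  by rewrite nth_iota; [rewrite add1n prednK | lia].
pose S j c := if c \in Y j then count (pred1 j) (take (T (f j c)) w) else 0.
have HR : forall j c, j < b -> c \in Y j -> Rel b w j (T (f j c)) (S j c).
  move=> j c Hj Hc; have /andP [H1 H2] := Hrange _ (fsh_sh Hj Hc).
  split => //; last by rewrite /S Hc.
  by rewrite Hw ?H1 ?H2 // Hlab.
have Hcnt : forall j, j < b -> count (pred1 j) w = q j.
  move=> j Hj; rewrite count_map.
  rewrite (eq_in_count (a2 := mem (map T (piece las j)))); last first.
    move=> v /Hv [j' [c' [Hj' Hc' ->]]]; rewrite /= Hlab // Hmemp //.
  rewrite count_mem_sub ?iota_uniq.
  - by rewrite size_map piece_fsh size_map size_ydiag.
  - rewrite map_inj_in_uniq; first by rewrite piece_fsh map_inj_uniq ?uniq_ydiag //; apply: fsh_inj.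
    by move=> x y; rewrite piece_fsh => /mapP [c Hc ->] /mapP [c' Hc' ->]; apply: Hinj; apply: fsh_sh.
  - move=> v /mapP [x]; rewrite piece_fsh => /mapP [c Hc ->] ->.
    by rewrite mem_iota add1n ltnS; apply: Hrange; apply: fsh_sh.
  by [].
exists S, w; constructor => //.
- apply/allP => x /mapP [v /Hv [j [c [Hj Hc ->]]] ->]; by rewrite Hlab.
- move=> j Hj; split; last by move=> c /negbTE; rewrite /S => ->.
  apply: perm_iota_char; last by rewrite size_map.
  + rewrite map_inj_in_uniq ?uniq_ydiag // => c c' Hc Hc' E.
    have := Rel_inj (jb Hj) (HR _ _ Hj Hc) (HR _ _ Hj Hc'); rewrite E eqxx => /eqP E2.
    exact: fsh_inj (Hinj _ _ (fsh_sh Hj Hc) (fsh_sh Hj Hc') E2).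
  + move=> t /mapP [c Hc ->]; rewrite mem_iota add1n ltnS (Rel_pos (jb Hj) (HR _ _ Hj Hc)).
    by rewrite size_ydiag -(Hcnt _ Hj); apply: Rel_le (HR _ _ Hj Hc).
Qed.

End Exist.

Lemma cat_inj_l (s1 s2 s3 : seq nat) : s1 ++ s2 = s1 ++ s3 -> s2 = s3.
Proof. by elim: s1 => //= x s IH [] /IH. Qed.

Lemma rot_periodic m k (w : seq nat) : size w = k * m -> rot m w = w ->
  w = flatten (nseq k (take m w)).
Proof.
elim: k w => [|k IH] w Hs Hr; first by move: Hs Hr; case: w.
set u := take m w; set v := drop m w.
have Hw : w = u ++ v by rewrite cat_take_drop.
have Hsu : size u = m by rewrite size_take Hs mulSn; case: ltnP => //; lia.
have Hsv : size v = k * m by rewrite size_drop Hs mulSn addKn.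
have Hvu : v ++ u = u ++ v by rewrite -Hw; exact: Hr.
have Hrv : rot m v = v.
  case: (posnP k) => Hk.
    by move: Hsv; rewrite Hk mul0n => /size0nil ->.
  have Htv : take m v = u.
    have := congr1 (take m) Hvu; rewrite takel_cat ?Hsv ?leq_pmull // take_size_cat //.
  rewrite /rot Htv; apply: (@cat_inj_l u).
  by rewrite catA -{1}Htv cat_take_drop Hvu.
have := IH v Hsv Hrv => Ev.
rewrite [LHS]Hw [in LHS]Ev /=; congr (_ ++ _).
case: (posnP k) => Hk; first by rewrite Hk.
by have := congr1 (take m) Hvu; rewrite takel_cat ?Hsv ?leq_pmull // take_size_cat // => ->.
Qed.

Lemma size_flatten_nseq k (u : seq nat) : size (flatten (nseq k u)) = k * size u.
Proof. by elim: k => //= k IH; rewrite size_cat IH mulSn. Qed.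

Lemma all_flatten_nseq (P : pred nat) k u : all P (flatten (nseq k u)) = (k == 0) || all P u.
Proof. by elim: k => //= k IH; rewrite all_cat IH; case: (all P u); rewrite ?orbT ?andbF. Qed.

Lemma count_flatten_nseq (P : pred nat) k u : count P (flatten (nseq k u)) = k * count P u.
Proof. by elim: k => //= k IH; rewrite count_cat IH mulSn. Qed.

Lemma nth_flatten_nseq d k (u : seq nat) p r : r < size u -> p < k ->
  nth d (flatten (nseq k u)) (p * size u + r) = nth d u r.
Proof.
move=> Hr; elim: p k => [|p IH] [|k] // Hpk /=.
  by rewrite nth_cat Hr.
rewrite nth_cat mulSn ltnNge -addnA leq_addr /= addKn; exact: IH.
Qed.

Lemma count_take_flatten_nseq (P : pred nat) k (u : seq nat) p a : a <= size u -> p < k ->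
  count P (take (p * size u + a) (flatten (nseq k u))) = p * count P u + count P (take a u).
Proof.
move=> Ha; elim: p k => [|p IH] [|k] // Hpk /=.
  by rewrite takel_cat.
rewrite take_cat mulSn ltnNge -addnA leq_addr /= addKn count_cat IH //; lia.
Qed.

Lemma flatten_nseq_rot k (u : seq nat) : u ++ flatten (nseq k u) = flatten (nseq k u) ++ u.
Proof. by elim: k => [|k IH] /=; rewrite ?cats0 // -catA -IH. Qed.

Lemma rot_flatten_nseq k (u : seq nat) : rot (size u) (flatten (nseq k u)) = flatten (nseq k u).
Proof.
case: k => [|k] /=; first by rewrite rot_oversize.
by rewrite rot_size_cat flatten_nseq_rot.
Qed.

Lemma sorted_count_iota (s : seq nat) r : sorted ltn s -> all (fun x => 0 < x) s -> r < size s ->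
  count (mem s) (iota 1 (nth 0 s r)) = r.+1.
Proof.
move=> Hs Hp Hr.
have Hu : uniq s by apply: sorted_uniq Hs; [exact: ltn_trans | exact: ltnn].
have E : count (mem s) (iota 1 (nth 0 s r)) = size [seq x <- s | x <= nth 0 s r].
  rewrite -size_filter; apply: perm_size; apply: uniq_perm.
  - by apply: filter_uniq; apply: iota_uniq.
  - exact: filter_uniq.
  move=> x; rewrite !mem_filter mem_iota /=; apply/andP/andP => [[A B] | [A B]].
    by split => //; lia.
  split => //; have := allP Hp _ B; lia.
rewrite E; elim: s r Hs Hp Hr {Hu E} => [|x s IH] [|r] //= Hs /andP [Hx Hp] Hr.
- rewrite leqnn /=; congr _.+1; apply/eqP; rewrite size_filter -leqn0 leqNgt -has_count.
  apply/negP => /hasP [y Hy Hyx].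
  have := (order_path_min ltn_trans Hs); move=> /allP /(_ _ Hy) /=; lia.
- have Hxn : x <= nth 0 s r.
    have := (order_path_min ltn_trans Hs) => /allP /(_ (nth 0 s r) (mem_nth _ Hr)) /=; lia.
  rewrite Hxn /= IH //; exact: path_sorted Hs.
Qed.

Lemma uniq_flatten_blocks (B : nat -> seq nat) (l : seq nat) : uniq l -> (forall j, uniq (B j)) ->
  (forall j j' x, j \in l -> j' \in l -> x \in B j -> x \in B j' -> j = j') ->
  uniq (flatten (map B l)).
Proof.
elim: l => //= a l IH /andP [Ha Hl] HB Hd; rewrite cat_uniq HB IH //; last first.
  by move=> j j' x Hj Hj'; apply: Hd; rewrite inE ?Hj ?Hj' orbT.
rewrite andbT; apply/hasPn => x /flatten_mapP [j Hj Hx]; apply/negP => Hx'.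
have Hj2 : j \in a :: l by rewrite inE Hj orbT.
have E := Hd a j x (mem_head _ _) Hj2 Hx' Hx.
by rewrite E Hj in Ha.
Qed.

Lemma flatten_blocks_disj (B : nat -> seq nat) (l : seq nat) j j' x : uniq (flatten (map B l)) ->
  j \in l -> j' \in l -> x \in B j -> x \in B j' -> j = j'.
Proof.
elim: l => //= a l IH; rewrite cat_uniq => /andP [_ /andP [Hd Hu]].
rewrite !inE => /orP [/eqP -> | Hj] /orP [/eqP -> | Hj'] // Hx Hx'.
- by move/hasP: Hd; case; exists x => //; apply/flatten_mapP; exists j'.
- by move/hasP: Hd; case; exists x => //; apply/flatten_mapP; exists j.
- exact: IH.
Qed.

Lemma gcd_list_dvd (s : seq nat) x : x \in s -> \big[gcdn/0]_(y <- s) y %| x.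
Proof.
elim: s => //= y s IH; rewrite inE big_cons => /orP [/eqP -> | H].
  exact: dvdn_gcdl.
exact: dvdn_trans (dvdn_gcdr _ _) (IH H).
Qed.

Lemma dvd_gcd_list (s : seq nat) k : (forall x, x \in s -> k %| x) -> k %| \big[gcdn/0]_(y <- s) y.
Proof.
elim: s => [|y s IH] H; first by rewrite big_nil dvdn0.
rewrite big_cons dvdn_gcd H ?mem_head // IH // => x Hx; apply: H; by rewrite inE Hx orbT.
Qed.

Lemma count_take_idx d (u : seq nat) j a : a <= size u ->
  count (pred1 j) (take a u) = count (fun i => nth d u i.-1 == j) (iota 1 a).
Proof.
move=> Ha; rewrite -(map_nth_iota0 d Ha) count_map.
have -> : iota 1 a = [seq 1 + i | i <- iota 0 a] by rewrite -iotaDl.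
by rewrite count_map; apply: eq_count => i /= .
Qed.

Section Core.
Variable las : seq (seq nat).
Hypothesis Hpart : all (fun la => is_partition la && (la != [::])) las.
Local Notation b := (size las).
Local Notation la j := (nth [::] las j).
Local Notation Y j := (ydiag (nth [::] las j)).
Local Notation q j := (sumn (nth [::] las j)).
Local Notation sh := (skew_union las).
Local Notation n := (sumn [seq sumn l | l <- las]).
Local Notation f := (fsh las).
Local Notation INV := (INV las).

Definition blocks_ok (k m : nat) (u : seq nat) (Ms : nat -> seq nat) :=
  forall j, j < b -> [/\ sorted ltn (Ms j), {subset Ms j <= iota 1 m},
        (forall i, i \in iota 1 m -> (i \in Ms j) = (nth b u i.-1 == j)) & k * size (Ms j) = q j].

Lemma blocks_count k m u Ms j a : size u = m -> blocks_ok k m u Ms -> j < b -> a <= m ->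
  count (pred1 j) (take a u) = count (mem (Ms j)) (iota 1 a).
Proof.
move=> Hs HB Hj Ha; have [_ _ Hc _] := HB j Hj.
rewrite (count_take_idx b) ?Hs //; apply: eq_in_count => i.
rewrite mem_iota => /andP [H1 H2] /=; rewrite Hc // mem_iota H1; lia.
Qed.

Lemma blocks_count_all k m u Ms j : size u = m -> blocks_ok k m u Ms -> j < b ->
  count (pred1 j) u = size (Ms j).
Proof.
move=> Hs HB Hj; have [Hso Hsub _ _] := HB j Hj.
rewrite -{1}(take_size u) Hs (blocks_count Hs HB Hj (leqnn m)).
apply: count_mem_sub => //; last exact: iota_uniq.
by apply: sorted_uniq Hso; [exact: ltn_trans | exact: ltnn].
Qed.

Lemma INV_blocks k m u Ms S : 0 < k -> n = k * m -> size u = m -> all (fun x => x < b) u ->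
  blocks_ok k m u Ms ->
  (forall j, j < b -> pfill (Y j) (S j) /\ forall c, c \notin Y j -> S j c = 0) ->
  INV (union_tab las (fun j => I_map m (Ms j) (S j))) S (flatten (nseq k u)).
Proof.
move=> Hk Hn Hs Hall HB HS; constructor => //.
- by rewrite size_flatten_nseq Hs Hn.
- by rewrite all_flatten_nseq Hall orbT.
- move=> j Hj; rewrite count_flatten_nseq (blocks_count_all Hs HB Hj).
  by case: (HB j Hj).
- move=> j c Hj Hc; rewrite (union_tab_fsh Hpart _ Hj Hc) /I_map.
  have [Hso Hsub Hch Hq] := HB j Hj.
  have /andP [Ht1 Ht2] := pfill_range (HS j Hj).1 Hc.
  rewrite size_ydiag -Hq in Ht2.
  set t := S j c in Ht1 Ht2 *; set cj := size (Ms j) in Ht2 Hq *.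
  have Hcj : 0 < cj by case: (posnP cj) Ht2 => // ->; rewrite muln0; lia.
  have -> : (t == 0) = false by apply/eqP; lia.
  set p := t.-1 %/ cj; set r := t.-1 %% cj.
  have Hr : r < cj by apply: ltn_pmod.
  have Hp : p < k by rewrite /p ltn_divLR //; lia.
  have Ha : nth 0 (Ms j) r \in Ms j by apply: mem_nth.
  have := Hsub _ Ha; rewrite mem_iota => /andP [Ha1 Ha2].
  have Hae := Hch _ (Hsub _ Ha); rewrite Ha in Hae.
  set a := nth 0 (Ms j) r in Ha Ha1 Ha2 Hae *.
  have Hpos : all (fun x => 0 < x) (Ms j).
    by apply/allP => x /Hsub; rewrite mem_iota => /andP [].
  split.
  + lia.
  + have -> : (p * m + a).-1 = p * size u + a.-1 by rewrite Hs; lia.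
    rewrite nth_flatten_nseq ?Hs //; [exact/eqP | lia].
  + rewrite -Hs count_take_flatten_nseq ?Hs //.
    have Ham : a <= m by lia.
    rewrite (blocks_count_all Hs HB Hj) (blocks_count Hs HB Hj Ham).
    rewrite sorted_count_iota // -/cj.
    have := divn_eq t.-1 cj; rewrite -/p -/r; lia.
- by move=> x Hx; rewrite union_tab_out.
Qed.

End Core.

Unset Implicit Arguments.
Theorem mainTheorem16 (las : seq (seq nat)) (k : nat) :
  0 < size las ->
  all (fun la => is_partition la && (la != [::])) las ->
  0 < k ->
  k %| sumn [seq sumn la | la <- las] ->
  let n := sumn [seq sumn la | la <- las] in
  let b := size las in
  let sh := skew_union las in
  (k %| \big[gcdn/0]_(la <- las) sumn la ->
    forall T : tableau,
      fixed_SYT sh (n %/ k) T <->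
      exists (Ts : nat -> tableau) (Ms : nat -> seq nat),
        (forall j, j < b ->
           fixed_SYT (ydiag (nth [::] las j)) (sumn (nth [::] las j) %/ k) (Ts j)) /\
        ordered_set_partition (n %/ k) b (fun j => sumn (nth [::] las j) %/ k) Ms /\
        T = union_tab las (fun j => I_map (n %/ k) (Ms j) (Ts j))) /\
  (~~ (k %| \big[gcdn/0]_(la <- las) sumn la) ->
    forall T : tableau, ~ fixed_SYT sh (n %/ k) T).
Proof.
move=> Hb Hpart Hk Hkn /=.
have Hn0 : 0 < sumn [seq sumn la | la <- las].
  move: Hb Hpart {Hkn}; case: las => [|l ls] //= _ /andP [/andP [/andP [_ Hl] Hne] _].
  case: l Hl Hne => [|x l] //= /andP [Hx _] _; lia.
set n := sumn [seq sumn la | la <- las] in Hn0 Hkn *.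
set m := n %/ k.
have Hn : n = k * m by rewrite /m mulnC divnK.
have Hmn : m <= n by rewrite Hn leq_pmull.
have Hgcd : (k %| \big[gcdn/0]_(la <- las) sumn la) <->
    (forall j, j < size las -> k %| sumn (nth [::] las j)).
  rewrite -(big_map sumn xpredT id); split => [H j Hj | H].
    apply: dvdn_trans H _; apply: gcd_list_dvd; apply/mapP; exists (nth [::] las j) => //.
    exact: mem_nth.
  apply: dvd_gcd_list => x /mapP [l Hl ->].
  by have := H (index l las); rewrite index_mem nth_index //; apply.
have Hfwd : forall T, fixed_SYT (skew_union las) m T ->
   exists S w, [/\ INV las T S w, (forall j, j < size las -> SYT (ydiag (nth [::] las j)) (S j)),
     w = flatten (nseq k (take m w)) &
     (forall j, j < size las -> iter (count (pred1 j) (take m w)) (promotion (ydiag (nth [::] las j))) (S j) = S j)].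
  move=> T [HT Hfix].
  have [S [w HI]] := INV_exists Hpart HT.
  have HI2 := INV_iter Hpart HI Hn0 Hmn; rewrite Hfix in HI2.
  have [Ew ES] := INV_uniq HI HI2.
  exists S, w; split => //.
  - by apply/(INV_SYT Hpart HI).
  - by apply: rot_periodic; [rewrite (I_size HI) -/n Hn | rewrite -Ew].
  - by move=> j Hj; rewrite {2}(ES j Hj).
have Hcntk : forall T S w, INV las T S w -> w = flatten (nseq k (take m w)) ->
    forall j, j < size las -> sumn (nth [::] las j) = k * count (pred1 j) (take m w).
  by move=> T S w HI Ew j Hj; rewrite -(I_cnt HI Hj) {1}Ew count_flatten_nseq.
split; last first.
  move=> Hndiv T /Hfwd [S [w [HI _ Ew _]]]; move/negP: Hndiv; apply; apply/Hgcd => j Hj.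
  by rewrite (Hcntk _ _ _ HI Ew j Hj) dvdn_mulr.
move=> Hdiv T; split.
  move=> /Hfwd [S [w [HI HSy Ew Hit]]].
  pose u := take m w.
  have Ewu : w = flatten (nseq k u) by exact: Ew.
  have Hsu : size u = m by rewrite size_take (I_size HI) -/n; case: ltnP => // H; lia.
  have Hallu : all (fun x => x < size las) u.
    apply/allP => x Hx; apply: (allP (I_all HI)); exact: mem_take Hx.
  pose Ms j := [seq i <- iota 1 m | nth (size las) u i.-1 == j].
  have HB : blocks_ok las k m u Ms.
    move=> j Hj; split.
    - by apply: sorted_filter; [exact: ltn_trans | exact: iota_ltn_sorted].
    - by move=> x; rewrite mem_filter => /andP [].
    - by move=> i Hi; rewrite mem_filter Hi andbT.
    - rewrite size_filter -(count_take_idx (size las)); last by rewrite Hsu.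
      by rewrite take_oversize ?Hsu // (Hcntk _ _ _ HI Ew j Hj).
  have Hsz : forall j, j < size las -> sumn (nth [::] las j) %/ k = size (Ms j).
    by move=> j Hj; have [_ _ _ <-] := HB j Hj; rewrite mulKn.
  exists S, Ms; split; [|split].
  - move=> j Hj; split; first exact: HSy.
    rewrite Hsz // -(blocks_count_all Hpart Hsu HB Hj); exact: Hit.
  - split.
      move=> j Hj; split; [by case: (HB j Hj) | by rewrite Hsz].
    apply: uniq_perm; last first.
    + move=> x; apply/flatten_mapP/idP => [[j Hj] | Hx].
        by rewrite mem_filter => /andP [].
      have /andP [H1 H2] : 0 < x < 1 + m by rewrite -mem_iota.
      exists (nth (size las) u x.-1).
        rewrite mem_iota /=; apply: (allP Hallu); apply: mem_nth; rewrite Hsu; lia.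
      by rewrite mem_filter Hx eqxx.
    + exact: iota_uniq.
    + apply: uniq_flatten_blocks; first exact: iota_uniq.
        by move=> j; apply: filter_uniq; apply: iota_uniq.
      move=> j j' x _ _; rewrite !mem_filter => /andP [/eqP <- _] /andP [/eqP <- _] //.
  - apply: (INV_T_eq HI); rewrite Ewu; apply: INV_blocks => //.
    exact: I_S HI.
move=> [Ts [Ms [HTs [[HMs Hperm] ->]]]].
have Hu : uniq (flatten [seq Ms j | j <- iota 0 (size las)]) by rewrite (perm_uniq Hperm) iota_uniq.
have Hsub : forall j x, j < size las -> x \in Ms j -> x \in iota 1 m.
  move=> j x Hj Hx; rewrite -(perm_mem Hperm); apply/flatten_mapP; exists j => //.
  by rewrite mem_iota.
have Hcov : forall x, x \in iota 1 m -> exists2 j, j < size las & x \in Ms j.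
  move=> x; rewrite -(perm_mem Hperm) => /flatten_mapP [j Hj Hx]; exists j => //.
  by move: Hj; rewrite mem_iota.
pose lab x := find (fun j => x \in Ms j) (iota 0 (size las)).
have Hlab : forall j x, j < size las -> x \in Ms j -> lab x = j.
  move=> j x Hj Hx; rewrite /lab -[RHS](find_iota_pred1 Hj); apply: eq_in_find => i Hi /=.
  apply/idP/eqP => [Hxi | ->] //.
  by apply: (flatten_blocks_disj Hu Hi _ Hxi Hx); rewrite mem_iota.
pose u := map lab (iota 1 m).
have Hsu : size u = m by rewrite size_map size_iota.
have Hnth : forall i, i \in iota 1 m -> nth (size las) u i.-1 = lab i.
  move=> i; rewrite mem_iota => /andP [H1 H2].
  rewrite (nth_map 0); last by rewrite size_iota; lia.
  by rewrite nth_iota; [rewrite add1n prednK | lia].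
have HB : blocks_ok las k m u Ms.
  move=> j Hj; have [Hso Hsz] := HMs j Hj; split => //.
  - by move=> x Hx; apply: Hsub Hj Hx.
  - move=> i Hi; rewrite Hnth //; apply/idP/eqP => [Hx | <-]; first exact: Hlab.
    by have [j' Hj' Hx] := Hcov _ Hi; rewrite (Hlab _ _ Hj' Hx).
  - by rewrite Hsz mulnC divnK //; apply: (proj1 Hgcd Hdiv j Hj).
have Hallu : all (fun x => x < size las) u.
  apply/allP => x /mapP [i Hi ->]; have [j Hj Hx] := Hcov _ Hi; by rewrite (Hlab _ _ Hj Hx).
have HS : forall j, j < size las -> pfill (ydiag (nth [::] las j)) (Ts j) /\
    forall c, c \notin ydiag (nth [::] las j) -> Ts j c = 0.
  by move=> j Hj; have [[H0 H1 _ _] _] := HTs j Hj; split.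
have HI := INV_blocks Hpart Hk Hn Hsu Hallu HB HS.
split.
  apply/(INV_SYT Hpart HI) => j Hj; exact: (HTs j Hj).1.
have HI2 := INV_iter Hpart HI Hn0 Hmn.
have Erot : rot m (flatten (nseq k u)) = flatten (nseq k u) by rewrite -{1}Hsu rot_flatten_nseq.
have Etake : take m (flatten (nseq k u)) = u.
  have : 0 < k := Hk; case: (k) => [|k'] //= _; by rewrite (take_size_cat _ Hsu).
have EiS : iterS las Ts (flatten (nseq k u)) m = Ts.
  apply: functional_extensionality => j; rewrite /iterS Etake.
  case: (ltnP j (size las)) => Hj.
    rewrite (blocks_count_all Hpart Hsu HB Hj); have [_ ->] := HMs j Hj; exact: (HTs j Hj).2.
  have -> : count (pred1 j) u = 0 => //.
  apply/eqP; rewrite -leqn0 leqNgt -has_count; apply/hasP => -[x Hx /eqP Exj].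
  by have := allP Hallu _ Hx; rewrite Exj ltnNge Hj.
rewrite Erot EiS in HI2.
exact: (INV_T_eq HI2 HI).
Qed.
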